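(* Let $V$ be an infinite-dimensional left vector space over a field $K$. Then the Grassmann graph on $\mathcal G$ is not connected. More precisely, for $X\in\mathcal G$, the connected component of $X$ consists of those $Y\in\mathcal G$ with $\dim((X+Y)/X)=\dim((X+Y)/Y)=d$ for some integer $d\ge0$; in particular no complement of $X$ in $V$ and no $Y\in\mathcal G$ with $Y<X$ or $Y>X$ lies in this component (and such elements of $\mathcal G$ exist, e.g. every hyperplane of $X$ belongs to $\mathcal G$). Moreover, every connected component of the Grassmann graph has infinite diameter.
   Context: Fields are not necessarily commutative (division rings). $\mathcal G$ denotes the set of all subspaces $X\le V$ such that $X$ is isomorphic to $V/X$. Two elements $X,Y\in\mathcal G$ are adjacent if $\dim((X+Y)/X)=\dim((X+Y)/Y)=1$. The Grassmann graph on $\mathcal G$ has vertex set $\mathcal G$ and edges the pairs of adjacent elements. $Y<X$ denotes strict inclusion of subspaces. *)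

(* Defs.v *)
From HB Require Import structures.
From mathcomp Require Import all_boot all_order all_algebra.
Set Implicit Arguments. Unset Strict Implicit. Unset Printing Implicit Defensive.
Import GRing.Theory.
Local Open Scope ring_scope.

Definition division_ring (K : unitRingType) : Prop :=
  forall x : K, x != 0 -> x \is a GRing.unit.

Section Grassmann.
Variables (K : unitRingType) (V : lmodType K).

Definition subspace (X : V -> Prop) : Prop :=
  X 0 /\ forall (a : K) (u v : V), X u -> X v -> X (a *: u + v).

Definition subsp_sum (X Y : V -> Prop) : V -> Prop :=
  fun v => exists x y, X x /\ Y y /\ v = x + y.

Definition subsp_cap (X Y : V -> Prop) : V -> Prop := fun v => X v /\ Y v.

Definition linear_map (f : V -> V) : Prop :=
  forall (a : K) (u v : V), f (a *: u + v) = a *: f u + f v.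

(* X is isomorphic to V/X: by the first isomorphism theorem, there is a
   linear map V -> V with image exactly X and kernel exactly X. *)
Definition iso_to_quot (X : V -> Prop) : Prop :=
  exists f : V -> V, linear_map f /\
    (forall v, X (f v)) /\ (forall x, X x -> exists v, f v = x) /\
    (forall v, f v = 0 <-> X v).

Definition inG (X : V -> Prop) : Prop := subspace X /\ iso_to_quot X.

Definition indep_mod (X : V -> Prop) (d : nat) (y : 'I_d -> V) : Prop :=
  forall c : 'I_d -> K, X (\sum_(i < d) c i *: y i) -> forall i, c i = 0.

(* dim (S/X) = d, for X <= S: the images of some y_0..y_{d-1} in S form a
   basis of S/X *)
Definition quot_dim (S X : V -> Prop) (d : nat) : Prop :=
  exists y : 'I_d -> V, (forall i, S (y i)) /\ indep_mod X y /\
    (forall v, S v -> exists (c : 'I_d -> K) (x : V),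
        X x /\ v = x + \sum_(i < d) c i *: y i).

Definition infinite_dim : Prop :=
  forall n, exists y : 'I_n -> V, indep_mod (fun v => v = 0) y.

Definition adjacent (X Y : V -> Prop) : Prop :=
  quot_dim (subsp_sum X Y) X 1 /\ quot_dim (subsp_sum X Y) Y 1.

Fixpoint walk (n : nat) (X Y : V -> Prop) : Prop :=
  match n with
  | 0 => X = Y
  | n'.+1 => exists Z, inG Z /\ adjacent X Z /\ walk n' Z Y
  end.

Definition gconnected (X Y : V -> Prop) : Prop := exists n, walk n X Y.

Definition complement (X Y : V -> Prop) : Prop :=
  subspace Y /\ (forall v, subsp_cap X Y v <-> v = 0) /\
  (forall v, subsp_sum X Y v).

Definition strict_sub (Y X : V -> Prop) : Prop :=
  (forall v, Y v -> X v) /\ exists v, X v /\ ~ Y v.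

End Grassmann.

(* Main.v *)
Require Import Defs.
From mathcomp Require Import all_boot all_order all_algebra.
From mathcomp Require classical_sets.
From Stdlib Require Import Classical ClassicalEpsilon FunctionalExtensionality PropExtensionality.
Set Implicit Arguments. Unset Strict Implicit. Unset Printing Implicit Defensive.
Import GRing.Theory.
Local Open Scope ring_scope.

Section Basics.
Variables (K : unitRingType) (V : lmodType K).
Hypothesis divK : division_ring K.

Implicit Types (X Y N A B : V -> Prop).

Definition zs : V -> Prop := fun v => v = 0.

Definition spanm N n (z : 'I_n -> V) : V -> Prop :=
  fun v => exists (c : 'I_n -> K) x, N x /\ v = x + \sum_(i < n) c i *: z i.

Lemma sub0 X : subspace X -> X 0.
Proof. by case. Qed.

Lemma subD X u v : subspace X -> X u -> X v -> X (u + v).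
Proof. by move=> [_ H] Xu Xv; have := H 1 u v Xu Xv; rewrite scale1r. Qed.

Lemma subZ X a u : subspace X -> X u -> X (a *: u).
Proof. by move=> [H0 H] Xu; have := H a u 0 Xu H0; rewrite addr0. Qed.

Lemma subN X u : subspace X -> X u -> X (- u).
Proof. by move=> sX Xu; rewrite -scaleN1r; apply: subZ. Qed.

Lemma subB X u v : subspace X -> X u -> X v -> X (u - v).
Proof. by move=> sX Xu Xv; apply: subD => //; apply: subN. Qed.

Lemma subDr X u v : subspace X -> X u -> X (u + v) -> X v.
Proof. by move=> sX Xu Xuv; have := subB sX Xuv Xu; rewrite addrC addKr. Qed.

Lemma subsum X n (c : 'I_n -> K) (z : 'I_n -> V) :
  subspace X -> (forall i, X (z i)) -> X (\sum_(i < n) c i *: z i).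
Proof.
move=> sX Xz; elim/big_ind: _ => //; first exact: sub0.
  by move=> u v; apply: subD.
by move=> i _; apply: subZ.
Qed.

Lemma zs_sub : subspace zs.
Proof. by split=> // a u v -> ->; rewrite scaler0 addr0. Qed.

Lemma sum_sub X Y : subspace X -> subspace Y -> subspace (subsp_sum X Y).
Proof.
move=> sX sY; split; first by exists 0, 0; rewrite addr0; do !split; apply: sub0.
move=> a u v [x [y [Xx [Yy ->]]]] [x' [y' [Xx' [Yy' ->]]]].
exists (a *: x + x'), (a *: y + y'); split; first by case: sX => _; apply.
split; first by case: sY => _; apply.
by rewrite scalerDr addrACA.
Qed.

Lemma cap_sub X Y : subspace X -> subspace Y -> subspace (subsp_cap X Y).
Proof.
move=> [X0 sX] [Y0 sY]; split=> // a u v [] ?? [] ??; split; [exact: sX|exact: sY].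
Qed.

Lemma spanm_sub N n (z : 'I_n -> V) : subspace N -> subspace (spanm N z).
Proof.
move=> sN; split.
  exists (fun _ => 0), 0; rewrite big1 ?addr0; first by split=> //; exact: sub0.
  by move=> i _; rewrite scale0r.
move=> a u v [c [x [Nx ->]]] [c' [x' [Nx' ->]]].
exists (fun i => a * c i + c' i), (a *: x + x'); split; first by case: sN => _; apply.
rewrite scalerDr addrACA; congr (_ + _); rewrite scaler_sumr -big_split /=.
by apply: eq_bigr => i _; rewrite scalerDl scalerA.
Qed.

Lemma spanmN N n (z : 'I_n -> V) x : subspace N -> N x -> spanm N z x.
Proof.
move=> sN Nx; exists (fun _ => 0), x; split=> //.
by rewrite big1 ?addr0 // => i _; rewrite scale0r.
Qed.

Lemma spanmz N n (z : 'I_n -> V) i : subspace N -> spanm N z (z i).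
Proof.
move=> sN; exists (fun j => if j == i then 1 else 0), 0; split; first exact: sub0.
rewrite add0r (bigD1 i) //= eqxx scale1r big1 ?addr0 // => j /negbTE ->.
by rewrite scale0r.
Qed.

Lemma sum_delta n (y : 'I_n -> V) i :
  \sum_(j < n) (if j == i then 1 else 0) *: y j = y i.
Proof.
rewrite (bigD1 i) //= eqxx scale1r big1 ?addr0 // => j /negbTE ->.
by rewrite scale0r.
Qed.

Lemma indep_notin N n (y : 'I_n -> V) i : indep_mod N y -> ~ N (y i).
Proof.
move=> Hi Ny; have := Hi (fun j => if j == i then 1 else 0).
rewrite sum_delta => /(_ Ny i); rewrite eqxx; apply/eqP; exact: oner_neq0.
Qed.

Lemma unit_nz (a : K) : a != 0 -> a \is a GRing.unit.
Proof. exact: divK. Qed.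

End Basics.
Arguments indep_notin [K V N n y] i.
Arguments zs {K V}.
Arguments zs_sub {K V}.

Section Stein.
Variables (K : unitRingType) (V : lmodType K).
Hypothesis divK : division_ring K.
Implicit Types (X Y N A B : V -> Prop).

Definition addl N (w : V) : V -> Prop := fun v => exists a x, N x /\ v = x + a *: w.

Lemma addl_sub N w : subspace N -> subspace (addl N w).
Proof.
move=> sN; split; first by exists 0, 0; rewrite scale0r addr0; split=> //; exact: sub0.
move=> a u v [b [x [Nx ->]]] [b' [x' [Nx' ->]]].
exists (a * b + b'), (a *: x + x'); split; first by case: sN => _; apply.
by rewrite scalerDr addrACA scalerDl scalerA.
Qed.

Lemma addlN N w x : subspace N -> N x -> addl N w x.
Proof. by move=> sN Nx; exists 0, x; rewrite scale0r addr0. Qed.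

Lemma addlw N w : subspace N -> addl N w w.
Proof. by move=> sN; exists 1, 0; rewrite scale1r add0r; split=> //; exact: sub0. Qed.

Lemma ext_sum m (d : 'I_m -> K) (a : K) (y : 'I_m.+1 -> V) :
  \sum_(i < m.+1) oapp d a (unlift ord_max i) *: y i =
  a *: y ord_max + \sum_(k < m) d k *: y (lift ord_max k).
Proof.
rewrite (bigD1_ord ord_max) //= unlift_none /=; congr (_ + _).
by apply: eq_bigr => k _; rewrite liftK.
Qed.

Lemma steinitz n : forall N m (z : 'I_n -> V) (y : 'I_m -> V),
  subspace N -> indep_mod N y -> (forall i, spanm N z (y i)) -> (m <= n)%N.
Proof.
elim: n => [|n IH] N m z y sN Hy Hs.
  case: m y Hy Hs => // m y Hy Hs; exfalso.
  apply: (indep_notin (ord0 : 'I_m.+1) Hy).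
  by have [c [x [Nx ->]]] := Hs ord0; rewrite big_ord0 addr0.
case: m y Hy Hs => // m y Hy Hs; rewrite ltnS.

have [c [x0 [Nx0 Eyl]]] := Hs ord_max.
have [j0 cj0] : exists j0, c j0 != 0.
  apply: NNPP => H; apply: (indep_notin ord_max Hy); rewrite Eyl big1 ?addr0 //.
  move=> j _; case: (eqVneq (c j) 0) => [->|hne]; first by rewrite scale0r.
  by exfalso; apply: H; exists j.
apply: (IH (addl N (y ord_max)) m (fun k => z (lift j0 k)) (fun k => y (lift ord_max k))).
- exact: addl_sub.
- move=> d [a [x [Nx E]]] k.
  have := Hy (fun i => oapp d (- a) (unlift ord_max i)); rewrite ext_sum.
  rewrite E scaleNr addrC addrK => /(_ Nx (lift ord_max k)).
  by rewrite liftK.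
- move=> k; have [e [x [Nx Eyk]]] := Hs (lift ord_max k).
  set u := (c j0)^-1.
  set S := \sum_(k0 < n) c (lift j0 k0) *: z (lift j0 k0).
  have zj0 : z j0 = u *: ((y ord_max) - x0 - S).
    rewrite Eyl (bigD1_ord j0) //= -/S.
    rewrite [x0 + _]addrC addrK addrK scalerA mulVr ?scale1r //.
    exact: unit_nz.
  set t := e j0 * u.
  exists (fun k0 => e (lift j0 k0) - t * c (lift j0 k0)), (x - t *: x0 + t *: (y ord_max)).
  split.
    apply: (subD (addl_sub _ sN)); last by apply: subZ; [exact: addl_sub | exact: addlw].
    by apply: addlN => //; apply: subB => //; apply: subZ.
  rewrite Eyk (bigD1_ord j0) //= zj0 scalerA -/t.
  have -> : \sum_(i < n) (e (lift j0 i) - t * c (lift j0 i)) *: z (lift j0 i)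
     = \sum_(i < n) e (lift j0 i) *: z (lift j0 i) - t *: S.
    rewrite /S scaler_sumr -sumrB; apply: eq_bigr => i _.
    by rewrite scalerBl scalerA.
  set E' := \sum_(i < n) _.
  rewrite !scalerBr.
  set A := t *: (y ord_max); set B := t *: x0; set C := t *: S.
  rewrite -!addrA; congr (_ + _); rewrite addrCA; congr (_ + _); congr (_ + _).
  exact: addrC.
Qed.

End Stein.

Lemma predext (T : Type) (P Q : T -> Prop) : (forall v, P v <-> Q v) -> P = Q.
Proof.
move=> H; apply: functional_extensionality => v; apply: propositional_extensionality; exact: H.
Qed.

Lemma fchoice (A B : Type) (R : A -> B -> Prop) :
  (forall a, exists b, R a b) -> exists f : A -> B, forall a, R a (f a).
Proof.
move=> H; exists (fun a => proj1_sig (constructive_indefinite_description _ (H a))).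
move=> a; exact: proj2_sig (constructive_indefinite_description _ (H a)).
Qed.

Lemma maxP (P : nat -> Prop) n :
  P 0%N -> (forall d, P d -> (d <= n)%N) -> exists d, P d /\ forall d', P d' -> (d' <= d)%N.
Proof.
move=> P0 Pb; apply: NNPP => H.
have H' : forall d, P d -> exists d', P d' /\ (d < d')%N.
  move=> d Pd; apply: NNPP => H2; apply: H; exists d; split=> // d' Pd'.
  by rewrite leqNgt; apply/negP => lt; apply: H2; exists d'.
suff : forall k, exists d, P d /\ (k <= d)%N.
  by case/(_ n.+1) => d [/Pb dn]; rewrite leqNgt ltnS dn.
elim=> [|k [d [Pd kd]]]; first by exists 0%N.
have [d' [Pd' dd']] := H' d Pd; exists d'; split=> //; exact: leq_ltn_trans kd dd'.
Qed.

Lemma split_l m n (k : 'I_m) : split (lshift n k) = inl k.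
Proof. exact: (unsplitK (inl _ k)). Qed.
Lemma split_r m n (k : 'I_n) : split (rshift m k) = inr k.
Proof. exact: (unsplitK (inr _ k)). Qed.

Section Greedy.
Variables (K : unitRingType) (V : lmodType K).
Hypothesis divK : division_ring K.
Implicit Types (X Y Z N M A B S : V -> Prop).

Definition ext d (w : 'I_d -> V) (v : V) : 'I_d.+1 -> V :=
  fun i => oapp w v (unlift ord_max i).

Lemma ext_max d (w : 'I_d -> V) v : ext w v ord_max = v.
Proof. by rewrite /ext unlift_none. Qed.
Lemma ext_lift d (w : 'I_d -> V) v k : ext w v (lift ord_max k) = w k.
Proof. by rewrite /ext liftK. Qed.

Lemma ord_cases d (i : 'I_d.+1) : i = ord_max \/ exists k, i = lift ord_max k.
Proof.
case: (eqVneq ord_max i) => [->|ne]; first by left.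
by right; have [k -> _] := unlift_some ne; exists k.
Qed.

Lemma sum_ext d (F : 'I_d.+1 -> V) :
  \sum_(i < d.+1) F i = F ord_max + \sum_(k < d) F (lift ord_max k).
Proof. by rewrite (bigD1_ord ord_max). Qed.

Lemma ext_indep N d (w : 'I_d -> V) v : subspace N ->
  indep_mod N w -> ~ spanm N w v -> indep_mod N (ext w v).
Proof.
move=> sN Hw Hv c; rewrite sum_ext ext_max.
under eq_bigr => k _ do rewrite ext_lift.
move=> NS.
have cm : c ord_max = 0.
  case: (eqVneq (c ord_max) 0) => // ne; exfalso; apply: Hv.
  set u := (c ord_max)^-1.
  exists (fun k => - (u * c (lift ord_max k))), (u *: (c ord_max *: v + \sum_(k < d) c (lift ord_max k) *: w k)).
  split; first exact: subZ.
  rewrite scalerDr scalerA mulVr ?scale1r; last exact: (unit_nz divK).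
  rewrite -addrA scaler_sumr -big_split /= big1 ?addr0 // => k _.
  by rewrite scalerA scaleNr addrN.
move: NS; rewrite cm scale0r add0r => /Hw Hc i.
by case: (ord_cases i) => [->|[k ->]].
Qed.

Lemma greedy N A n (z : 'I_n -> V) : subspace N -> subspace A ->
  (forall v, A v -> spanm N z v) -> exists d, (d <= n)%N /\ quot_dim A N d.
Proof.
move=> sN sA Hz.
pose P d := exists w : 'I_d -> V, (forall i, A (w i)) /\ indep_mod N w.
have Pb : forall d, P d -> (d <= n)%N.
  move=> d [w [Aw Iw]]; apply: (steinitz divK sN Iw) => i; exact: Hz.
have P0 : P 0%N by exists (fun _ => 0); split=> [[]//|c _ []].
have [d [[w [Aw Iw]] Hmax]] := maxP P0 Pb.
exists d; split; first by apply: Pb; exists w.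
exists w; split=> //; split=> // v Av.
apply: NNPP => Hv.
have : P d.+1.
  exists (ext w v); split; last exact: ext_indep.
  by move=> i; case: (ord_cases i) => [->|[k ->]]; rewrite ?ext_max ?ext_lift.
by move/Hmax; rewrite ltnn.
Qed.

Lemma quot_span S N d : quot_dim S N d -> exists z : 'I_d -> V, forall v, S v -> spanm N z v.
Proof. by case=> y [_ [_ H]]; exists y. Qed.

Lemma quot_dim_uniq S N d d' : subspace N -> quot_dim S N d -> quot_dim S N d' -> d = d'.
Proof.
move=> sN [y [Sy [Iy Hy]]] [y' [Sy' [Iy' Hy']]].
apply/eqP; rewrite eqn_leq; apply/andP; split.
  by apply: (steinitz divK sN Iy) => i; apply: Hy'.
by apply: (steinitz divK sN Iy') => i; apply: Hy.
Qed.

Lemma quot_dim0 S N : subspace N -> (forall v, S v -> N v) -> quot_dim S N 0.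
Proof.
move=> sN H; exists (fun _ => 0); split=> [[]//|]; split=> [c _ []//|v Sv].
by exists (fun _ => 0), v; rewrite big_ord0 addr0; split=> //; exact: H.
Qed.

Lemma quot_dim0_sub S N v : quot_dim S N 0 -> S v -> N v.
Proof. by case=> y [_ [_ H]] /H [c [x [Nx ->]]]; rewrite big_ord0 addr0. Qed.

Lemma quot_int A N n (z : 'I_n -> V) : subspace N -> subspace A ->
  (forall v, A v -> spanm N z v) ->
  exists d, (d <= n)%N /\ quot_dim A (subsp_cap A N) d.
Proof.
move=> sN sA Hz; have [d [dn [w [Aw [Iw Sw]]]]] := greedy sN sA Hz.
exists d; split=> //; exists w; split=> //; split.
  by move=> c [_ Nc]; apply: Iw.
move=> v Av; have [c [x [Nx E]]] := Sw v Av; exists c, x; split=> //; split=> //.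
have -> : x = v - \sum_(i < d) c i *: w i by rewrite E addrK.
by apply: subB => //; apply: subsum.
Qed.

Lemma ord_split m n (i : 'I_(m + n)) :
  (exists k, i = lshift n k) \/ (exists k, i = rshift m k).
Proof.
rewrite -(splitK i); case: (split i) => k /=; [left|right]; by exists k.
Qed.

Lemma quot_trans A M N a b : subspace N -> subspace M ->
  (forall v, N v -> M v) -> (forall v, M v -> A v) ->
  quot_dim A M a -> quot_dim M N b -> quot_dim A N (b + a).
Proof.
move=> sN sM NM MA [y [Ay [Iy Hy]]] [w [Mw [Iw Hw]]].
pose u (i : 'I_(b + a)) := match split i with inl k => w k | inr k => y k end.
have ul k : u (lshift a k) = w k by rewrite /u split_l.
have ur k : u (rshift b k) = y k by rewrite /u split_r.
exists u; split.
  by move=> i; rewrite /u; case: (split i) => k //; apply: MA.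
split.
  move=> c; rewrite big_split_ord /=.
  under eq_bigr => k _ do rewrite ul.
  under [X in _ + X]eq_bigr => k _ do rewrite ur.
  move=> NS.
  have Hc2 : forall k, c (rshift b k) = 0.
    apply: Iy; apply: (subDr sM _ (NM _ NS)).
    by apply: subsum.
  move: NS; rewrite [X in _ + X]big1 ?addr0; last by move=> k _; rewrite Hc2 scale0r.
  move=> /Iw Hc1 i; case: (ord_split i) => [[k ->]|[k ->]]; [exact: Hc1|exact: Hc2].
move=> v Av; have [c [m [Mm ->]]] := Hy v Av; have [c' [x [Nx ->]]] := Hw m Mm.
exists (fun i => match split i with inl k => c' k | inr k => c k end), x; split=> //.
rewrite big_split_ord /= -addrA; congr (_ + (_ + _)); apply: eq_bigr => k _.
  by rewrite ul split_l.
by rewrite ur split_r.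
Qed.

Lemma quotQ X Y e : subspace X -> subspace Y ->
  quot_dim X (subsp_cap X Y) e -> quot_dim (subsp_sum X Y) Y e.
Proof.
move=> sX sY [w [Xw [Iw Hw]]]; exists w; split.
  by move=> i; exists (w i), 0; rewrite addr0; split=> //; split=> //; exact: sub0.
split; first by move=> c Yc; apply: Iw; split=> //; apply: subsum.
move=> v [x [y [Xx [Yy ->]]]]; have [c [m [[Xm Ym] ->]]] := Hw x Xx.
exists c, (m + y); split; first exact: subD.
by rewrite addrAC.
Qed.

Lemma quotQ' X Y e : subspace X -> subspace Y ->
  quot_dim (subsp_sum X Y) Y e -> quot_dim X (subsp_cap X Y) e.
Proof.
move=> sX sY [w [Sw [Iw Hw]]].
have [f Hf] := fchoice Sw.
have hYd : forall i, Y (w i - f i).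
  by move=> i; have [y [_ [Yy ->]]] := Hf i; rewrite addrC addKr.
have hsum : forall c : 'I_e -> K, \sum_(i < e) c i *: w i =
    \sum_(i < e) c i *: f i + \sum_(i < e) c i *: (w i - f i).
  move=> c; rewrite -big_split /=; apply: eq_bigr => i _.
  by rewrite -scalerDr addrC subrK.
exists f; split; first by move=> i; have [y [Xf _]] := Hf i.
split.
  move=> c [_ Yc]; apply: Iw; rewrite hsum; apply: subD => //.
  by apply: subsum.
move=> v Xv.
have [c [x [Yx E]]] : exists (c : 'I_e -> K) x, Y x /\ v = x + \sum_(i < e) c i *: w i.
  apply: Hw; exists v, 0; rewrite addr0; split=> //; split=> //; exact: sub0.
exists c, (v - \sum_(i < e) c i *: f i); split; last by rewrite subrK.
split.
  apply: subB => //; apply: subsum => // i; by have [y [Xf _]] := Hf i.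
rewrite E hsum addrCA addrAC subrr add0r; apply: subD => //; exact: subsum.
Qed.


Lemma sum_comm X Y : subsp_sum X Y = subsp_sum Y X.
Proof.
apply: predext => v; split=> -[x [y [Xx [Yy ->]]]]; exists y, x; by rewrite addrC.
Qed.

Lemma cap_comm X Y : subsp_cap X Y = subsp_cap Y X.
Proof. by apply: predext => v; split=> -[]. Qed.

Lemma spanm_mono M A n (z : 'I_n -> V) v : (forall u, M u -> A u) -> spanm M z v -> spanm A z v.
Proof. by move=> MA [c [x [Mx ->]]]; exists c, x; split=> //; apply: MA. Qed.

Lemma fd_sub B A M s : subspace M -> subspace A -> subspace B ->
  (forall v, M v -> A v) -> (forall v, A v -> B v) -> quot_dim B M s ->
  (exists e, quot_dim B A e) /\ (exists f, quot_dim A M f).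
Proof.
move=> sM sA sB MA AB /quot_span [z Hz]; split.
  have [e [_ H]] := greedy sA sB (fun v Bv => spanm_mono MA (Hz v Bv)); by exists e.
have [f [_ H]] := greedy sM sA (fun v Av => Hz v (AB v Av)); by exists f.
Qed.

Lemma idx X Y M s : subspace X -> subspace Y -> subspace M ->
  (forall v, M v -> X v) -> (forall v, M v -> Y v) ->
  quot_dim X M s -> quot_dim Y M s ->
  exists e, (e <= s)%N /\ quot_dim (subsp_sum X Y) X e /\ quot_dim (subsp_sum X Y) Y e.
Proof.
move=> sX sY sM MX MY hX hY.
have sI := cap_sub sX sY.
have MI : forall v, M v -> subsp_cap X Y v by move=> v Mv; split; [apply: MX|apply: MY].
have [[e1 h1] [f h2]] := fd_sub sM sI sX MI (fun v => @proj1 _ _) hX.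
have [[e2 h3] [f' h4]] := fd_sub sM sI sY MI (fun v => @proj2 _ _) hY.
have E1 := quot_dim_uniq sM (quot_trans sM sI MI (fun v => @proj1 _ _) h1 h2) hX.
have E2 := quot_dim_uniq sM (quot_trans sM sI MI (fun v => @proj2 _ _) h3 h4) hY.
have Ef := quot_dim_uniq sM h2 h4.
have Ee : e1 = e2 by apply/eqP; rewrite -(eqn_add2l f) {2}Ef E1 E2.
exists e1; split; first by rewrite -E1 leq_addl.
split.
  rewrite sum_comm; apply: quotQ => //; rewrite cap_comm Ee //.
exact: quotQ.
Qed.

Lemma step_fwd X Z Y d : subspace X -> subspace Z -> subspace Y ->
  quot_dim (subsp_sum X Z) X 1 -> quot_dim (subsp_sum X Z) Z 1 ->
  quot_dim (subsp_sum Z Y) Z d -> quot_dim (subsp_sum Z Y) Y d ->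
  exists e, (e <= d.+1)%N /\ quot_dim (subsp_sum X Y) X e /\ quot_dim (subsp_sum X Y) Y e.
Proof.
move=> sX sZ sY a1 a2 b1 b2.
have h1 := quotQ' sX sZ a2.
have h2 : quot_dim Z (subsp_cap Z X) 1 by apply: quotQ' => //; rewrite sum_comm.
have h3 := quotQ' sZ sY b2.
have h4 : quot_dim Y (subsp_cap Y Z) d by apply: quotQ' => //; rewrite sum_comm.
pose M := fun v => X v /\ Z v /\ Y v.
have sM : subspace M.
  split; first by split; [exact: sub0|split; exact: sub0].
  move=> a u v [? [? ?]] [? [? ?]]; split; first by case: sX => _; apply.
  by split; [case: sZ => _; apply|case: sY => _; apply].
have [z2 Hz2] := quot_span h3.
have [p [pd hp]] := quot_int (cap_sub sZ sY) (cap_sub sX sZ)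
   (fun v (H : subsp_cap X Z v) => Hz2 v (proj2 H)).
have EM1 : subsp_cap (subsp_cap X Z) (subsp_cap Z Y) = M.
  by apply: predext => v; split=> [[[? ?] [? ?]]|[? [? ?]]]; do !split.
rewrite EM1 in hp.
have [z1 Hz1] := quot_span h2.
have [q [q1 hq]] := quot_int (cap_sub sZ sX) (cap_sub sZ sY)
   (fun v (H : subsp_cap Z Y v) => Hz1 v (proj1 H)).
have EM2 : subsp_cap (subsp_cap Z Y) (subsp_cap Z X) = M.
  by apply: predext => v; split=> [[[? ?] [? ?]]|[? [? ?]]]; do !split.
rewrite EM2 in hq.
have hX := quot_trans sM (cap_sub sX sZ) (fun v (H : M v) => conj (proj1 H) (proj1 (proj2 H)))
  (fun v => @proj1 _ _) h1 hp.
have hZ1 : quot_dim Z M (p + 1).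
  apply: (quot_trans sM (cap_sub sX sZ) (fun v (H : M v) => conj (proj1 H) (proj1 (proj2 H)))
     (fun v => @proj2 _ _)) => //.
  by rewrite cap_comm.
have hZ2 := quot_trans sM (cap_sub sZ sY) (fun v (H : M v) => conj (proj1 (proj2 H)) (proj2 (proj2 H)))
  (fun v => @proj1 _ _) h3 hq.
have Epq := quot_dim_uniq sM hZ1 hZ2.
have hY : quot_dim Y M (p + 1).
  rewrite Epq; apply: (quot_trans sM (cap_sub sZ sY)
     (fun v (H : M v) => conj (proj1 (proj2 H)) (proj2 (proj2 H))) (fun v => @proj2 _ _)) => //.
  by rewrite cap_comm.
have [e [es He]] := idx sX sY sM (fun v => @proj1 _ _) (fun v (H : M v) => proj2 (proj2 H)) hX hY.
exists e; split=> //; apply: (leq_trans es); by rewrite addn1.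
Qed.

Lemma walk_fwd m : forall X Y, subspace X -> subspace Y -> walk m X Y ->
  exists d, (d <= m)%N /\ quot_dim (subsp_sum X Y) X d /\ quot_dim (subsp_sum X Y) Y d.
Proof.
elim: m => [|m IH] X Y sX sY /=.
  move=> <-; exists 0%N; split=> //.
  have h : quot_dim (subsp_sum X X) X 0.
    by apply: quot_dim0 => // v [x [y [Xx [Yy ->]]]]; apply: subD.
  by split.
move=> [Z [[sZ _] [[a1 a2] W]]].
have [d [dm [b1 b2]]] := IH Z Y sZ sY W.
have [e [ed He]] := step_fwd sX sZ sY a1 a2 b1 b2.
by exists e; split=> //; apply: leq_trans ed _.
Qed.

End Greedy.

Lemma predext' (T : Type) (P Q : T -> Prop) : (forall v, P v <-> Q v) -> P = Q.
Proof.
move=> H; apply: functional_extensionality => v; apply: propositional_extensionality; exact: H.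
Qed.

Definition pchain (T : Type) (F : (T -> Prop) -> Prop) :=
  forall S S', F S -> F S' -> (forall v, S v -> S' v) \/ (forall v, S' v -> S v).

Lemma zorn_pred (T : Type) (Q : (T -> Prop) -> Prop) (S0 : T -> Prop) (t0 : T) :
  Q S0 -> S0 t0 ->
  (forall F : (T -> Prop) -> Prop, (forall S, F S -> Q S) -> pchain F -> (exists S, F S) ->
     Q (fun v => exists S, F S /\ S v)) ->
  exists S, Q S /\ forall S', Q S' -> (forall v, S v -> S' v) -> forall v, S' v -> S v.
Proof.
move=> QS0 S0t HF.
pose P (A : T -> Prop) := A = (fun _ => False) \/ Q A.
have [|A [PA Amax]] := @classical_sets.Zorn_bigcup T P.
  move=> F FP Ftot.
  case: (classic (exists S, F S /\ Q S)) => [[S1 [FS1 QS1]]|Hn].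
  - right.
    pose F' := fun S => F S /\ Q S.
    have -> : classical_sets.bigcup F (fun X => X) = (fun v => exists S, F' S /\ S v).
      apply: predext' => v; split.
        move=> [S FS Sv]; exists S; split=> //; split=> //.
        case: (FP S FS) => // E; by rewrite E in Sv.
      by move=> [S [[FS _] Sv]]; exists S.
    apply: HF.
    + by move=> S [].
    + move=> S S' [FS _] [FS' _]; case: (Ftot S S' FS FS') => H; [left|right]; exact: H.
    + by exists S1.
  - left; apply: predext' => v; split=> // -[S FS Sv].
    case: (FP S FS) => E; first by rewrite E in Sv.
    by apply: Hn; exists S.
case: PA => [E|QA].
  exfalso; apply: (Amax S0); last by right.
  by rewrite E; split=> // H; have := H t0 S0t.
exists A; split=> // S' QS' AS' v S'v.
apply: NNPP => nA; apply: (Amax S'); last by right.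
split=> // H; exact: nA (H v S'v).
Qed.

Section Iso.
Variables (K : unitRingType) (V : lmodType K).
Hypothesis divK : division_ring K.
Implicit Types (X Y Z N M A B S C U : V -> Prop).

Lemma rel_compl U S : subspace U -> subspace S -> (forall v, S v -> U v) ->
  exists C, [/\ subspace C, (forall v, C v -> U v), (forall v, C v -> S v -> v = 0)
   & (forall u, U u -> subsp_sum S C u)].
Proof.
move=> sU sS SU.
pose Q C := [/\ subspace C, (forall v, C v -> U v) & (forall v, C v -> S v -> v = 0)].
have [|//||C [[sC CU CS] Cmax]] := @zorn_pred V Q zs 0.
- by split=> [|v ->|v ->] //; [exact: zs_sub|exact: sub0].
- move=> F FQ Fch [S1 FS1]; split.
  + split; first by exists S1; split=> //; have [[]] := FQ S1 FS1.
    move=> a u v [S2 [FS2 S2u]] [S3 [FS3 S3v]].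
    case: (Fch S2 S3 FS2 FS3) => H.
      exists S3; split=> //; have [[_ h] _ _] := FQ S3 FS3; apply: h => //; exact: H.
    exists S2; split=> //; have [[_ h] _ _] := FQ S2 FS2; apply: h => //; exact: H.
  + by move=> v [S2 [FS2 S2v]]; have [_ h _] := FQ S2 FS2; apply: h.
  + by move=> v [S2 [FS2 S2v]]; have [_ _ h] := FQ S2 FS2; apply: h.
exists C; split=> // u Uu; apply: NNPP => Hu.
have QC' : Q (addl C u).
  split; first exact: addl_sub.
    by move=> v [a [c [Cc ->]]]; apply: subD => //; [apply: CU|apply: subZ].
  move=> v [a [c [Cc ->]]] Sv.
  case: (eqVneq a 0) => [a0|an0].
    by move: Sv; rewrite a0 scale0r addr0 => Sc; exact: CS.
  exfalso; apply: Hu.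
  exists (a^-1 *: (c + a *: u)), (- (a^-1 *: c)); split; first exact: subZ.
  split; first by apply: subN => //; apply: subZ.
  rewrite scalerDr scalerA mulVr ?scale1r; last exact: (unit_nz divK).
  by rewrite addrAC subrr add0r.
have := Cmax _ QC' (fun v Cv => addlN u sC Cv) u (addlw _ sC).
move=> Cu; apply: Hu; exists 0, u; rewrite add0r; split=> //; exact: sub0.
Qed.

Lemma compl_ex X : subspace X ->
  exists C, [/\ subspace C, (forall v, C v -> X v -> v = 0) & (forall v, subsp_sum X C v)].
Proof.
move=> sX.
have sT : subspace (fun _ : V => True) by [].
have [C [sC _ CX H]] := rel_compl sT sX (fun _ _ => I).
by exists C; split=> // v; apply: H.
Qed.

Record isorel A B (G : V -> V -> Prop) : Prop := IsoRel {
  ir0 : G 0 0;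
  irlin : forall a u v u' v', G u v -> G u' v' -> G (a *: u + u') (a *: v + v');
  irdom : forall u v, G u v -> A u /\ B v;
  irtot : forall u, A u -> exists v, G u v;
  irsur : forall v, B v -> exists u, G u v;
  irfun : forall u v v', G u v -> G u v' -> v = v';
  irinj : forall u u' v, G u v -> G u' v -> u = u' }.

Definition iso A B := exists G, isorel A B G.

Lemma irD A B G u v u' v' : isorel A B G -> G u v -> G u' v' -> G (u + u') (v + v').
Proof. by move=> h g g'; have := irlin h 1 g g'; rewrite !scale1r. Qed.

Lemma irZ A B G a u v : isorel A B G -> G u v -> G (a *: u) (a *: v).
Proof. by move=> h g; have := irlin h a g (ir0 h); rewrite !addr0. Qed.

Lemma ir_sum A B G n (c : 'I_n -> K) y y' : isorel A B G -> (forall i, G (y i) (y' i)) ->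
  G (\sum_(i < n) c i *: y i) (\sum_(i < n) c i *: y' i).
Proof.
move=> h Hy; elim/big_rec2: _; first exact: ir0 h.
by move=> i a b _ g; apply: (irD h) => //; apply: (irZ _ h).
Qed.

Lemma iso_sym A B : iso A B -> iso B A.
Proof.
move=> [G h]; exists (fun u v => G v u); split.
- exact: ir0 h.
- by move=> a u v u' v' g g'; apply: (irlin h a).
- by move=> u v /(irdom h) [].
- exact (irsur h).
- exact (irtot h).
- by move=> u v v'; apply: (irinj h).
- by move=> u u' v; apply: (irfun h).
Qed.

Lemma iso_trans A B C : iso A B -> iso B C -> iso A C.
Proof.
move=> [G h] [H k]; exists (fun u w => exists v, G u v /\ H v w); split.
- by exists 0; split; [exact: ir0 h|exact: ir0 k].
- move=> a u w u' w' [v [g1 h1]] [v' [g2 h2]]; exists (a *: v + v'); split.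
    exact (irlin h a g1 g2).
  exact (irlin k a h1 h2).
- move=> u w [v [g1 h1]]; split; first by have [] := irdom h g1.
  by have [] := irdom k h1.
- move=> u Au; have [v g] := irtot h Au.
  have [_ Bv] := irdom h g; have [w hh] := irtot k Bv; by exists w, v.
- move=> w Cw; have [v hh] := irsur k Cw.
  have [Bv _] := irdom k hh; have [u g] := irsur h Bv; by exists u, v.
- move=> u w w' [v [g1 h1]] [v' [g2 h2]].
  rewrite (irfun h g1 g2) in h1; exact (irfun k h1 h2).
- move=> u u' w [v [g1 h1]] [v' [g2 h2]].
  rewrite -(irinj k h1 h2) in g2; exact (irinj h g1 g2).
Qed.

Lemma iso_refl A : subspace A -> iso A A.
Proof.
move=> sA; exists (fun u v => A u /\ u = v); split.
- by split=> //; exact: sub0.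
- move=> a u v u' v' [Au <-] [Au' <-]; split=> //; by case: sA => _; apply.
- by move=> u v [Au <-].
- by move=> u Au; exists u.
- by move=> v Av; exists v.
- by move=> u v v' [_ <-] [_ <-].
- by move=> u u' v [_ ->] [_ ->].
Qed.

Lemma iso_dsum A A' B B' : subspace A -> subspace A' -> subspace B -> subspace B' ->
  (forall v, A v -> A' v -> v = 0) -> (forall v, B v -> B' v -> v = 0) ->
  iso A B -> iso A' B' -> iso (subsp_sum A A') (subsp_sum B B').
Proof.
move=> sA sA' sB sB' dA dB [G h] [G' h'].
have dsA : forall a1 a1' a2 a2', A a1 -> A' a1' -> A a2 -> A' a2' ->
    a1 + a1' = a2 + a2' -> a1 = a2 /\ a1' = a2'.
  move=> a1 a1' a2 a2' ? ? ? ? E.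
  have e : a1 - a2 = a2' - a1'.
    have := congr1 (fun x => x - a2 - a1') E.
    by rewrite /= [a1 + a1' - a2]addrAC addrK [a2 + a2']addrC addrK.
  have z : a1 - a2 = 0 by apply: dA; [apply: subB|rewrite e; apply: subB].
  split; first by apply/eqP; rewrite -subr_eq0 z.
  by apply/eqP; rewrite eq_sym -subr_eq0 -e z.
have dsB : forall a1 a1' a2 a2', B a1 -> B' a1' -> B a2 -> B' a2' ->
    a1 + a1' = a2 + a2' -> a1 = a2 /\ a1' = a2'.
  move=> a1 a1' a2 a2' ? ? ? ? E.
  have e : a1 - a2 = a2' - a1'.
    have := congr1 (fun x => x - a2 - a1') E.
    by rewrite /= [a1 + a1' - a2]addrAC addrK [a2 + a2']addrC addrK.
  have z : a1 - a2 = 0 by apply: dB; [apply: subB|rewrite e; apply: subB].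
  split; first by apply/eqP; rewrite -subr_eq0 z.
  by apply/eqP; rewrite eq_sym -subr_eq0 -e z.
exists (fun u v => exists a a' b b', [/\ G a b, G' a' b', u = a + a' & v = b + b']).
split.
- by exists 0, 0, 0, 0; split; rewrite ?addr0 //; [exact: ir0 h|exact: ir0 h'].
- move=> c u v u' v' [a [a' [b [b' [g g' -> ->]]]]] [e [e' [f [f' [k k' -> ->]]]]].
  exists (c *: a + e), (c *: a' + e'), (c *: b + f), (c *: b' + f'); split.
  + exact (irlin h c g k).
  + exact (irlin h' c g' k').
  + by rewrite scalerDr addrACA.
  + by rewrite scalerDr addrACA.
- move=> u v [a [a' [b [b' [g g' -> ->]]]]].
  have [Aa Bb] := irdom h g; have [Aa' Bb'] := irdom h' g'.
  by split; [exists a, a'|exists b, b'].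
- move=> u [a [a' [Aa [Aa' ->]]]].
  have [b g] := irtot h Aa; have [b' g'] := irtot h' Aa'.
  by exists (b + b'), a, a', b, b'.
- move=> v [b [b' [Bb [Bb' ->]]]].
  have [a g] := irsur h Bb; have [a' g'] := irsur h' Bb'.
  by exists (a + a'), a, a', b, b'.
- move=> u v w [a [a' [b [b' [g g' -> ->]]]]] [e [e' [f [f' [k k' E ->]]]]].
  have [Aa Bb] := irdom h g; have [Aa' Bb'] := irdom h' g'.
  have [Ae Bf] := irdom h k; have [Ae' Bf'] := irdom h' k'.
  have [E1 E2] := dsA _ _ _ _ Aa Aa' Ae Ae' E.
  rewrite E1 in g; rewrite E2 in g'.
  by rewrite (irfun h g k) (irfun h' g' k').
- move=> u w v [a [a' [b [b' [g g' -> ->]]]]] [e [e' [f [f' [k k' -> E]]]]].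
  have [Aa Bb] := irdom h g; have [Aa' Bb'] := irdom h' g'.
  have [Ae Bf] := irdom h k; have [Ae' Bf'] := irdom h' k'.
  have [E1 E2] := dsB _ _ _ _ Bb Bb' Bf Bf' E.
  rewrite E1 in g; rewrite E2 in g'.
  by rewrite (irinj h g k) (irinj h' g' k').
Qed.

Definition line (w : V) : V -> Prop := fun v => exists a, v = a *: w.

Lemma line_sub w : subspace (line w).
Proof.
split; first by exists 0; rewrite scale0r.
by move=> a u v [b ->] [c ->]; exists (a * b + c); rewrite scalerDl scalerA.
Qed.

Lemma free1 (w : V) a : w != 0 -> a *: w = 0 -> a = 0.
Proof.
move=> wn E; case: (eqVneq a 0) => // an.
move: E => /(congr1 (fun v => a^-1 *: v)); rewrite scalerA mulVr ?scale1r ?scaler0.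
  by move=> E; rewrite E eqxx in wn.
exact: (unit_nz divK).
Qed.

Lemma iso_line (w w' : V) : w != 0 -> w' != 0 -> iso (line w) (line w').
Proof.
move=> wn wn'; exists (fun u v => exists a, u = a *: w /\ v = a *: w'); split.
- by exists 0; rewrite !scale0r.
- move=> c u v u' v' [a [-> ->]] [b [-> ->]]; exists (c * a + b).
  by rewrite !scalerDl !scalerA.
- by move=> u v [a [-> ->]]; split; exists a.
- by move=> u [a ->]; exists (a *: w'), a.
- by move=> v [a ->]; exists (a *: w), a.
- move=> u v v' [a [E ->]] [b [E' ->]]; rewrite E in E'.
  have : (a - b) *: w = 0 by rewrite scalerBl E' subrr.
  by move/(free1 wn)/eqP; rewrite subr_eq0 => /eqP ->.
- move=> u u' v [a [-> E]] [b [-> E']]; rewrite E in E'.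
  have : (a - b) *: w' = 0 by rewrite scalerBl E' subrr.
  by move/(free1 wn')/eqP; rewrite subr_eq0 => /eqP ->.
Qed.

Lemma addl_line N w : addl N w = subsp_sum N (line w).
Proof.
apply: predext => v; split.
  by move=> [a [x [Nx ->]]]; exists x, (a *: w); split=> //; split=> //; exists a.
by move=> [x [y [Nx [[a ->] ->]]]]; exists a, x.
Qed.

End Iso.

Section Fin.
Variables (K : unitRingType) (V : lmodType K).
Hypothesis divK : division_ring K.
Implicit Types (X Y Z N M A B S C U : V -> Prop).

Lemma dsum_uniq A B a1 b1 a2 b2 : subspace A -> subspace B ->
  (forall v, A v -> B v -> v = 0) -> A a1 -> B b1 -> A a2 -> B b2 ->
  a1 + b1 = a2 + b2 -> a1 = a2 /\ b1 = b2.
Proof.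
move=> sA sB dA ? ? ? ? E.
have e : a1 - a2 = b2 - b1.
  have := congr1 (fun x => x - a2 - b1) E.
  by rewrite /= [a1 + b1 - a2]addrAC addrK [a2 + b2]addrC addrK.
have z : a1 - a2 = 0 by apply: dA; [apply: subB|rewrite e; apply: subB].
split; first by apply/eqP; rewrite -subr_eq0 z.
by apply/eqP; rewrite eq_sym -subr_eq0 -e z.
Qed.

Lemma inG_iso X C : inG X -> subspace C -> (forall v, C v -> X v -> v = 0) ->
  (forall v, subsp_sum X C v) -> iso C X.
Proof.
move=> [sX [f [lf [fX [fsur fker]]]]] sC CX XC.
have f0 : f 0 = 0 by apply/fker; exact: sub0.
have fD : forall u v, f (u + v) = f u + f v by move=> u v; rewrite -[u]scale1r lf !scale1r.
have fZ : forall a u, f (a *: u) = a *: f u by move=> a u; rewrite -[a *: u]addr0 lf f0 addr0.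
exists (fun u w => C u /\ w = f u); split.
- by split; [exact: sub0|rewrite f0].
- move=> a u v u' v' [Cu ->] [Cu' ->]; split; last by rewrite lf.
  by case: sC => _; apply.
- by move=> u v [Cu ->]; split=> //; apply: fX.
- by move=> u Cu; exists (f u).
- move=> x Xx; have [v fv] := fsur x Xx.
  have [x' [c [Xx' [Cc E]]]] := XC v.
  exists c; split=> //; rewrite -fv E fD.
  have -> : f x' = 0 by apply/fker.
  by rewrite add0r.
- by move=> u v v' [_ ->] [_ ->].
- move=> u u' v [Cu ->] [Cu' E].
  have : f (u - u') = 0 by rewrite fD -scaleN1r fZ scaleN1r E subrr.
  move/fker => Xd; apply/eqP; rewrite -subr_eq0; apply/eqP; apply: CX => //.
  exact: subB.
Qed.

Lemma iso_inG X C : subspace X -> subspace C -> (forall v, C v -> X v -> v = 0) ->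
  (forall v, subsp_sum X C v) -> iso C X -> inG X.
Proof.
move=> sX sC CX XC [G h].
have XC0 : forall v, X v -> C v -> v = 0 by move=> v ? ?; apply: CX.
pose R v w := exists x c, [/\ X x, C c, v = x + c & G c w].
have ex : forall v, exists w, R v w.
  move=> v; have [x [c [Xx [Cc E]]]] := XC v.
  have [w g] := irtot h Cc; by exists w, x, c.
have [f Hf] := fchoice ex.
have uq : forall v w, R v w -> w = f v.
  move=> v w [x [c [Xx Cc E g]]]; have [x' [c' [Xx' Cc' E' g']]] := Hf v.
  have [_ ec] := dsum_uniq sX sC XC0 Xx Cc Xx' Cc' (etrans (esym E) E').
  by rewrite ec in g; exact: (irfun h g g').
split=> //; exists f; split.
  move=> a u v; apply: esym; apply: uq.
  have [x [c [Xx Cc -> g]]] := Hf u; have [x' [c' [Xx' Cc' -> g']]] := Hf v.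
  exists (a *: x + x'), (a *: c + c'); split.
  - by case: sX => _; apply.
  - by case: sC => _; apply.
  - by rewrite scalerDr addrACA.
  - exact (irlin h a g g').
split.
  by move=> v; have [x [c [_ _ _ g]]] := Hf v; have [] := irdom h g.
split.
  move=> x Xx; have [c g] := irsur h Xx; exists c; apply: esym; apply: uq.
  have [Cc _] := irdom h g; exists 0, c; split=> //; [exact: sub0|by rewrite add0r].
move=> v; split.
  move=> fv; have [x [c [Xx Cc E g]]] := Hf v; rewrite fv in g.
  have c0 := irinj h g (ir0 h); by rewrite E c0 addr0.
move=> Xv; apply: esym; apply: uq; exists v, 0; split=> //; [exact: sub0|by rewrite addr0|exact: ir0 h].
Qed.

Definition finsp A := exists d, quot_dim A zs d.

Lemma finsp_span A n (z : 'I_n -> V) : subspace A -> (forall v, A v -> spanm zs z v) -> finsp A.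
Proof. by move=> sA Hz; have [d [_ H]] := greedy divK zs_sub sA Hz; exists d. Qed.

Lemma finsp_iso A B : subspace B -> iso A B -> finsp A -> finsp B.
Proof.
move=> sB [G h] [d [y [Ay [_ Hy]]]].
have [y' Hy'] := fchoice (fun i => irtot h (Ay i)).
apply: (finsp_span (z := y')) => // v Bv.
have [u g] := irsur h Bv; have [Au _] := irdom h g.
have [c [x [x0 E]]] := Hy u Au; rewrite /zs in x0; rewrite x0 add0r in E.
rewrite E in g; have := ir_sum c h Hy' => g'.
rewrite (irfun h g g'); exists c, 0; split=> //; by rewrite add0r.
Qed.

Lemma finsp_sum A B : subspace A -> subspace B -> finsp A -> finsp B -> finsp (subsp_sum A B).
Proof.
move=> sA sB [a [y [_ [_ Hy]]]] [b [w [_ [_ Hw]]]].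
pose u (i : 'I_(a + b)) := match split i with inl k => y k | inr k => w k end.
apply: (finsp_span (z := u)); first exact: sum_sub.
move=> v [x [x' [Ax [Bx' ->]]]].
have [c [z0 [z00 ->]]] := Hy x Ax; have [c' [z1 [z10 ->]]] := Hw x' Bx'.
rewrite /zs in z00 z10; rewrite z00 z10 !add0r.
exists (fun i => match split i with inl k => c k | inr k => c' k end), 0; split=> //.
rewrite add0r big_split_ord /=; congr (_ + _); apply: eq_bigr => k _.
  by rewrite /u split_l.
by rewrite /u split_r.
Qed.

Lemma finsp_sub A B : subspace A -> (forall v, A v -> B v) -> finsp B -> finsp A.
Proof.
move=> sA AB [d [y [_ [_ Hy]]]]; apply: (finsp_span (z := y)) => // v Av; exact: Hy (AB v Av).
Qed.

Lemma nfinsp_vecs A : subspace A -> ~ finsp A ->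
  forall n, exists w : 'I_n -> V, (forall i, A (w i)) /\ indep_mod zs w.
Proof.
move=> sA nA; elim=> [|n [w [Aw Iw]]].
  by exists (fun _ => 0); split=> [[]//|c _ []].
have [v [Av Hv]] : exists v, A v /\ ~ spanm zs w v.
  apply: NNPP => H; apply: nA; apply: (finsp_span (z := w)) => // v Av.
  by apply: NNPP => H'; apply: H; exists v.
exists (ext w v); split; last exact: ext_indep zs_sub Iw Hv.
by move=> i; case: (ord_cases i) => [->|[k ->]]; rewrite ?ext_max ?ext_lift.
Qed.

Lemma V_nfinsp : infinite_dim V -> ~ finsp (fun _ => True).
Proof.
move=> iV [d [y [_ [_ Hy]]]]; have [w Iw] := iV d.+1.
have := steinitz divK zs_sub Iw (fun i => Hy (w i) I); by rewrite ltnn.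
Qed.

Lemma inG_nfinsp X C : infinite_dim V -> inG X -> subspace C ->
  (forall v, C v -> X v -> v = 0) -> (forall v, subsp_sum X C v) ->
  ~ finsp X /\ ~ finsp C.
Proof.
move=> iV gX sC CX XC; have sX := proj1 gX.
have i := inG_iso gX sC CX XC.
have hV : finsp X -> finsp C -> False.
  move=> fX fC; apply: (V_nfinsp iV).
  have -> : (fun _ : V => True) = subsp_sum X C by apply: predext.
  exact: finsp_sum.
split=> [fX|fC]; apply: hV => //.
  exact: finsp_iso (iso_sym i) fX.
exact: finsp_iso i fC.
Qed.

End Fin.

Fixpoint preseq (T : Type) (x0 : T) (g : {n : nat & 'I_n -> T} -> T) (n : nat) : seq T :=
  match n with
  | 0 => [::]
  | n.+1 => rcons (preseq x0 g n) (g (existT _ n (fun i : 'I_n => nth x0 (preseq x0 g n) i)))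
  end.

Lemma size_preseq T x0 g n : size (@preseq T x0 g n) = n.
Proof. by elim: n => //= n IH; rewrite size_rcons IH. Qed.

Lemma nth_preseq T x0 g n m i : (i < n)%N -> (n <= m)%N ->
  nth x0 (@preseq T x0 g m) i = nth x0 (preseq x0 g n) i.
Proof.
move=> inn nm; rewrite -(subnKC nm); elim: (m - n)%N => [|k IH]; first by rewrite addn0.
by rewrite addnS /= nth_rcons size_preseq (leq_trans inn (leq_addr _ _)) IH.
Qed.

Section Inf.
Variables (K : unitRingType) (V : lmodType K).
Hypothesis divK : division_ring K.
Implicit Types (X Y Z N M A B S C U : V -> Prop).

Lemma infseq A : subspace A -> ~ finsp A ->
  exists e : nat -> V, (forall i, A (e i)) /\ forall n, indep_mod zs (fun i : 'I_n => e i).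
Proof.
move=> sA nA.
have H : forall p : {n : nat & 'I_n -> V}, exists v, (forall i, A (projT2 p i)) -> A v /\ ~ spanm zs (projT2 p) v.
  move=> [n w] /=.
  case: (classic (exists v, A v /\ ~ spanm zs w v)) => [[v Hv]|Hn]; first by exists v.
  exfalso; apply: nA; apply: (finsp_span divK (z := w)) => // v Av.
  by apply: NNPP => H'; apply: Hn; exists v.
have [g Hg] := fchoice H.
pose e i := nth 0 (preseq 0 g i.+1) i.
have ee : forall n i, (i < n)%N -> nth 0 (preseq 0 g n) i = e i.
  by move=> n i lt; rewrite /e (nth_preseq _ _ (ltnSn i) lt).
have eg : forall n, e n = g (existT _ n (fun i : 'I_n => nth 0 (preseq 0 g n) i)).
  by move=> n; rewrite /e /= nth_rcons size_preseq ltnn eqxx.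
have fam : forall n, (fun i : 'I_n => nth 0 (preseq 0 g n) i) = (fun i : 'I_n => e i).
  by move=> n; apply: functional_extensionality => i; apply: ee.
have Hall : forall n, (forall i, (i < n)%N -> A (e i)) /\ indep_mod zs (fun i : 'I_n => e i).
  elim=> [|n [Ae Ie]]; first by split=> // c _ [].
  have [Aen Sen] : A (e n) /\ ~ spanm zs (fun i : 'I_n => e i) (e n).
    have := Hg (existT _ n (fun i : 'I_n => nth 0 (preseq 0 g n) i)); rewrite -eg /= fam.
    by apply=> i; rewrite (ee n i (ltn_ord i)); apply: Ae; exact: ltn_ord.
  split.
    by move=> i; rewrite ltnS leq_eqVlt => /orP [/eqP ->|]; [|apply: Ae].
  have -> : (fun i : 'I_n.+1 => e i) = ext (fun i : 'I_n => e i) (e n).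
    apply: functional_extensionality => i; case: (ord_cases i) => [->|[k ->]].
      by rewrite ext_max.
    by rewrite ext_lift /= /bump leqNgt ltn_ord.
  exact (ext_indep divK zs_sub Ie Sen).
exists e; split; last by move=> n; case: (Hall n).
by move=> i; case: (Hall i.+1) => H1 _; apply: H1.
Qed.

Definition lc n (c : nat -> K) (f : nat -> V) := \sum_(i < n) c i *: f i.
Definition bnd (c : nat -> K) n := forall i, (n <= i)%N -> c i = 0.
Definition sh (a : K) (c : nat -> K) : nat -> K := fun i => if i is j.+1 then c j else a.

Lemma lc_ext n m c f : bnd c n -> (n <= m)%N -> lc m c f = lc n c f.
Proof.
move=> bc nN; rewrite /lc -(subnKC nN); elim: (m - n)%N => [|k IH]; first by rewrite addn0.
by rewrite addnS big_ord_recr /= IH bc ?leq_addr // scale0r addr0.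
Qed.

Lemma lc_beq n n' c f : bnd c n -> bnd c n' -> lc n c f = lc n' c f.
Proof.
move=> b b'; rewrite -(lc_ext f b (leq_addr n' n)) (lc_ext f b' (leq_addl n n')) //.
Qed.

Definition pad n (c : nat -> K) : nat -> K := fun i => if (i < n)%N then c i else 0.

Lemma pad_bnd n c : bnd (pad n c) n.
Proof. by move=> i ni; rewrite /pad ltnNge ni. Qed.

Lemma lc_pad n c f : lc n (pad n c) f = lc n c f.
Proof. by apply: eq_bigr => i _; rewrite /pad ltn_ord. Qed.

Lemma bnd_mono c n m : bnd c n -> (n <= m)%N -> bnd c m.
Proof. by move=> b nN i Ni; apply: b; apply: leq_trans Ni. Qed.

Lemma lc_lin b n n' c c' f : bnd c n -> bnd c' n' ->
  b *: lc n c f + lc n' c' f = lc (n + n') (fun i => b * c i + c' i) f /\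
  bnd (fun i => b * c i + c' i) (n + n').
Proof.
move=> bc bc'; split; last first.
  by move=> i ni; rewrite bc ?bc' ?mulr0 ?addr0 //; apply: leq_trans ni;
     [exact: leq_addl|exact: leq_addr].
rewrite -(lc_ext f bc (leq_addr n' n)) -(lc_ext f bc' (leq_addl n n')).
rewrite /lc scaler_sumr -big_split /=; apply: eq_bigr => i _.
by rewrite scalerDl scalerA.
Qed.

Lemma sh_bnd a c n : bnd c n -> bnd (sh a c) n.+1.
Proof. by move=> b [|i] //; rewrite ltnS /=; apply: b. Qed.

Lemma lc_uniq (e : nat -> V) n n' c c' : (forall n, indep_mod zs (fun i : 'I_n => e i)) ->
  bnd c n -> bnd c' n' -> lc n c e = lc n' c' e -> c = c'.
Proof.
move=> Ie b b' E; apply: functional_extensionality => i.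
case: (leqP (n + n') i) => iN.
  by rewrite b ?b' //; apply: leq_trans iN; [exact: leq_addl|exact: leq_addr].
have : lc (n + n') c e - lc (n + n') c' e = 0.
  by rewrite (lc_ext e b (leq_addr n' n)) (lc_ext e b' (leq_addl n n')) E subrr.
rewrite /lc -sumrB => H.
have := Ie (n + n')%N (fun j => c j - c' j).
have H2 : zs (\sum_(j < n + n') (c j - c' j) *: e j).
  by rewrite /zs; apply: etrans _ H; apply: eq_bigr => j _; rewrite scalerBl.
move/(_ H2 (Ordinal iN)) => /= /eqP; rewrite subr_eq0 => /eqP.
done.
Qed.

End Inf.

Section HH.
Variables (K : unitRingType) (V : lmodType K).
Hypothesis divK : division_ring K.
Implicit Types (X Y Z N M A B S C U : V -> Prop).

Lemma bnd0 n : bnd (fun _ : nat => 0 : K) n.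
Proof. by []. Qed.

Lemma lc0 c (f : nat -> V) : lc 0 c f = 0.
Proof. by rewrite /lc big_ord0. Qed.

Lemma HH U r : subspace U -> ~ finsp U -> (forall a, U (a *: r) -> a = 0) ->
  iso (addl U r) U.
Proof.
move=> sU nU rU.
have [e [Ue Ie]] := infseq divK sU nU.
pose Sp v := exists n c, bnd c n /\ v = lc n c e.
have sSp : subspace Sp.
  split; first by exists 0%N, (fun _ => 0); rewrite lc0.
  move=> b u v [n [c [bc ->]]] [n' [c' [bc' ->]]].
  have [E B] := lc_lin b e bc bc'; by exists (n + n')%N, (fun i => b * c i + c' i).
have spl : forall n c, bnd c n -> Sp (lc n c e) by move=> n c bc; exists n, c.
have SpU : forall v, Sp v -> U v.
  move=> v [n [c [_ ->]]]; exact: (subsum _ sU (fun i : 'I_n => Ue i)).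
have [T [sT TU TSp hUST]] := rel_compl divK sU sSp SpU.
have rc : forall a1 a2 u1 u2, U u1 -> U u2 -> u1 + a1 *: r = u2 + a2 *: r -> a1 = a2 /\ u1 = u2.
  move=> a1 a2 u1 u2 U1 U2 E.
  have E' : (a1 - a2) *: r = u2 - u1.
    by apply/eqP; rewrite scalerBl subr_eq addrAC -E [u1 + _]addrC addrK.
  have a12 : a1 = a2 by apply/eqP; rewrite -subr_eq0; apply/eqP; apply: rU; rewrite E'; apply: subB.
  by split=> //; move: E; rewrite a12 => /addIr.
have LU : forall n c, U (lc n c e) by move=> n c; apply: SpU; exists n, (pad n c);
  split; [exact: pad_bnd|by rewrite lc_pad].
exists (fun v w => exists t n c a, [/\ T t, bnd c n, v = t + lc n c e + a *: r
                                    & w = t + lc n.+1 (sh a c) e]).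
split.
- exists 0, 0%N, (fun _ => 0), 0; split=> //; first exact: sub0.
    by rewrite lc0 scale0r !addr0.
  by rewrite /lc big_ord_recr big_ord0 /= scale0r !add0r.
- move=> b v w v' w' [t [n [c [a [Tt bc -> ->]]]]] [t' [n' [c' [a' [Tt' bc' -> ->]]]]].
  have [E1 B1] := lc_lin b e bc bc'.
  have [E2 B2] := lc_lin b e (sh_bnd a bc) (sh_bnd a' bc').
  exists (b *: t + t'), (n + n')%N, (fun i => b * c i + c' i), (b * a + a'); split.
  + by case: sT => _; apply.
  + exact: B1.
  + rewrite -E1 scalerDl -scalerA !scalerDr.
    set x1 := b *: t; set x2 := b *: lc n c e; set x3 := b *: (a *: r).
    set y2 := lc n' c' e; set y3 := a' *: r.
    by rewrite addrACA [x1 + x2 + _]addrACA.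
  + have -> : lc (n + n').+1 (sh (b * a + a') (fun i => b * c i + c' i)) e =
              lc (n.+1 + n'.+1) (fun i => b * sh a c i + sh a' c' i) e.
      have -> : sh (b * a + a') (fun i => b * c i + c' i) = (fun i => b * sh a c i + sh a' c' i).
        by apply: functional_extensionality => -[|i].
      apply: lc_beq => //; move=> [|i] // ni; exact: B1 i ni.
    by rewrite -E2 scalerDr addrACA.
- move=> v w [t [n [c [a [Tt bc -> ->]]]]]; split.
    exists a, (t + lc n c e); split=> //; apply: subD => //; try exact: TU; try exact: LU.
  by apply: subD => //; try exact: TU; try exact: LU.
- move=> v [a [x [Ux ->]]]; have [s [t [[n [c [bc ->]]] [Tt ->]]]] := hUST x Ux.
  exists (t + lc n.+1 (sh a c) e), t, n, c, a; split=> //.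
  by rewrite [lc n c e + t]addrC.
- move=> w Uw; have [s [t [[n [c [bc ->]]] [Tt ->]]]] := hUST w Uw.
  exists (t + lc n (fun i => c i.+1) e + c 0%N *: r), t, n, (fun i => c i.+1), (c 0%N).
  split=> //.
    by move=> i ni; apply: bc; apply: leq_trans ni _.
  have -> : sh (c 0%N) (fun i => c i.+1) = c by apply: functional_extensionality => -[|i].
  rewrite addrC; congr (_ + _); apply: lc_beq => //; exact: bnd_mono bc _.
- move=> v w1 w2 [t1 [n1 [c1 [a1 [T1 b1 E1 ->]]]]] [t2 [n2 [c2 [a2 [T2 b2 E2 ->]]]]].
  have U1 : U (t1 + lc n1 c1 e) by apply: subD => //; try exact: TU; try exact: LU.
  have U2 : U (t2 + lc n2 c2 e) by apply: subD => //; try exact: TU; try exact: LU.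
  have [ea eu] := rc _ _ _ _ U1 U2 (etrans (esym E1) E2).
  have [et el] := dsum_uniq sT sSp TSp T1 (spl _ _ b1) T2 (spl _ _ b2) eu.
  have ec := lc_uniq Ie b1 b2 el.
  rewrite et ea ec; congr (_ + _); apply: lc_beq; apply: sh_bnd => //.
  by rewrite -ec.
- move=> v1 v2 w [t1 [n1 [c1 [a1 [T1 b1 -> E1]]]]] [t2 [n2 [c2 [a2 [T2 b2 -> E2]]]]].
  have [et el] := dsum_uniq sT sSp TSp T1 (spl _ _ (sh_bnd a1 b1)) T2 (spl _ _ (sh_bnd a2 b2))
                   (etrans (esym E1) E2).
  have es := lc_uniq Ie (sh_bnd a1 b1) (sh_bnd a2 b2) el.
  have ea : a1 = a2 by have := congr1 (fun f => f 0%N) es.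
  have ec : c1 = c2.
    by apply: functional_extensionality => i; have := congr1 (fun f => f i.+1) es.
  rewrite et ea ec; congr (_ + _ + _); apply: lc_beq => //; by rewrite -ec.
Qed.

End HH.

Section Hyp.
Variables (K : unitRingType) (V : lmodType K).
Hypothesis divK : division_ring K.
Hypothesis iV : infinite_dim V.
Implicit Types (X Y Z N M A B S C U D H : V -> Prop).

Lemma q1_addl A H : subspace A -> subspace H -> (forall v, H v -> A v) ->
  quot_dim A H 1 -> exists y, A = addl H y /\ (forall a, H (a *: y) -> a = 0).
Proof.
move=> sA sH HA [y [Ay [Iy Sy]]]; exists (y ord0); split.
  apply: predext => v; split.
    move=> Av; have [c [x [Hx ->]]] := Sy v Av; exists (c ord0), x; split=> //.
    by rewrite big_ord1.
  move=> [a [x [Hx ->]]]; apply: subD => //; [exact: HA|exact: subZ].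
move=> a Ha; have := Iy (fun _ => a); rewrite big_ord1 => /(_ Ha ord0) //.
Qed.

Lemma addl_q1 H y : subspace H -> (forall a, H (a *: y) -> a = 0) ->
  quot_dim (addl H y) H 1.
Proof.
move=> sH Hy; exists (fun _ => y); split; first by move=> _; exact: addlw.
split; first by move=> c; rewrite big_ord1 => /Hy c0 i; rewrite (ord1 i).
by move=> v [a [x [Hx ->]]]; exists (fun _ => a), x; rewrite big_ord1.
Qed.

Lemma y_nz H y : subspace H -> (forall a, H (a *: y) -> a = 0) -> y != 0.
Proof.
move=> sH Hy; apply/eqP => y0; have := Hy 1; rewrite y0 scaler0 => /(_ (sub0 sH)).
by move/eqP; rewrite oner_eq0.
Qed.

Lemma finsp_line (y : V) : finsp (line y).
Proof.
apply: (finsp_span divK (z := fun _ : 'I_1 => y)); first exact: line_sub.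
by move=> v [a ->]; exists (fun _ => a), 0; rewrite big_ord1 add0r.
Qed.

Lemma L1 X H : inG X -> subspace H -> (forall v, H v -> X v) -> quot_dim X H 1 -> inG H.
Proof.
move=> gX sH HX q; have sX := proj1 gX.
have [y [EX yH]] := q1_addl sX sH HX q.
have Xy : X y by rewrite EX; exact: addlw.
have [C [sC CX XC]] := compl_ex divK sX.
have [nX nC] := inG_nfinsp divK iV gX sC CX XC.
have iCX := inG_iso gX sC CX XC.
have [w [Cw Iw]] := nfinsp_vecs divK sC nC 1.
set r := w ord0.
have rn : r != 0 by apply/eqP => r0; apply: (indep_notin ord0 Iw).
have yn := y_nz sH yH.
pose D := addl C y.
have sD : subspace D := addl_sub y sC.
have DH : forall v, D v -> H v -> v = 0.
  move=> v [a [c [Cc ->]]] Hv.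
  have Xc : X c by rewrite -(addrK (a *: y) c); apply: subB => //; [exact: HX|exact: subZ].
  rewrite (CX c Cc Xc) add0r in Hv *; by rewrite (yH a Hv) scale0r.
have HD : forall v, subsp_sum H D v.
  move=> v; have [x [c [Xx [Cc ->]]]] := XC v.
  move: Xx; rewrite EX => -[a [h [Hh ->]]].
  exists h, (c + a *: y); split=> //; split; first by exists a, c.
  by rewrite addrA addrAC.
apply: (iso_inG sH sD DH HD).
have i1 : iso D (subsp_sum X (line r)).
  rewrite /D addl_line; apply: iso_dsum => //; try exact: line_sub.
  - move=> v Cv [a E]; apply: CX => //; rewrite E; exact: subZ.
  - move=> v Xv [a E]; apply: CX => //; rewrite E; apply: subZ => //; exact: Cw.
  - exact: iso_line.
have i2 : iso (subsp_sum X (line r)) X.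
  rewrite -addl_line; apply: (HH divK sX nX) => a Xa.
  apply: (free1 divK rn); apply: CX => //; apply: subZ => //; exact: Cw.
have i3 : iso X H.
  have nH : ~ finsp H.
    move=> fH; apply: nX; rewrite EX addl_line; apply: finsp_sum => //.
      exact: line_sub.
    exact: finsp_line.
  by rewrite {1}EX; apply: (HH divK sH nH).
exact: iso_trans (iso_trans i1 i2) i3.
Qed.

Lemma L2 X Z : inG X -> subspace Z -> (forall v, X v -> Z v) -> quot_dim Z X 1 -> inG Z.
Proof.
move=> gX sZ XZ q; have sX := proj1 gX.
have [y [EZ yX]] := q1_addl sZ sX XZ q.
have Zy : Z y by rewrite EZ; exact: addlw.
have yn := y_nz sX yX.
have [D [sD DZ ZD]] := compl_ex divK sZ.
pose C := addl D y.
have sC : subspace C := addl_sub y sD.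
have CX : forall v, C v -> X v -> v = 0.
  move=> v [a [d [Dd ->]]] Xv.
  have Zd : Z d by rewrite -(addrK (a *: y) d); apply: subB => //; [exact: XZ|exact: subZ].
  rewrite (DZ d Dd Zd) add0r in Xv *; by rewrite (yX a Xv) scale0r.
have XC : forall v, subsp_sum X C v.
  move=> v; have [z [d [Zz [Dd ->]]]] := ZD v.
  move: Zz; rewrite EZ => -[a [x [Xx ->]]].
  exists x, (d + a *: y); split=> //; split; first by exists a, d.
  by rewrite addrA addrAC.
have [nX nC] := inG_nfinsp divK iV gX sC CX XC.
have iCX := inG_iso gX sC CX XC.
have nD : ~ finsp D.
  move=> fD; apply: nC; rewrite /C addl_line; apply: finsp_sum => //.
    exact: line_sub.
  exact: finsp_line.
apply: (iso_inG sZ sD DZ ZD).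
have i1 : iso D C.
  apply: iso_sym; apply: (HH divK sD nD) => a Da.
  by apply: (free1 divK yn); apply: DZ => //; apply: subZ.
have i2 : iso X Z by rewrite EZ; apply: iso_sym; apply: (HH divK sX nX).
exact: iso_trans (iso_trans i1 iCX) i2.
Qed.

Lemma hyper A N d : subspace A -> subspace N -> (forall v, N v -> A v) ->
  quot_dim A N d.+1 -> exists H, [/\ subspace H, (forall v, N v -> H v),
   (forall v, H v -> A v), quot_dim A H 1 & quot_dim H N d].
Proof.
move=> sA sN NA [x [Ax [Ix Sx]]].
pose x' := fun k : 'I_d => x (lift ord_max k).
exists (spanm N x'); split.
- exact: spanm_sub.
- by move=> v Nv; apply: spanmN.
- move=> v [c [n [Nn ->]]]; apply: subD => //; first exact: NA.
  by apply: subsum => // k; apply: Ax.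
- exists (fun _ => x ord_max); split; first by move=> _; apply: Ax.
  split.
    move=> c; rewrite big_ord1 => -[c' [n [Nn E]]] i; rewrite (ord1 i).
    have := Ix (fun i => oapp (fun k => - c' k) (c ord0) (unlift ord_max i)).
    rewrite sum_ext; under eq_bigr => k _ do rewrite liftK /=.
    rewrite /= unlift_none /=.
    have -> : c ord0 *: x ord_max + \sum_(i < d) - c' i *: x (lift ord_max i) = n.
      rewrite E /x' -addrA -big_split /= big1 ?addr0 // => k _.
      by rewrite scaleNr addrN.
    by move/(_ Nn ord_max); rewrite unlift_none.
  move=> v Av; have [c [n [Nn ->]]] := Sx v Av.
  exists (fun _ => c ord_max), (n + \sum_(k < d) c (lift ord_max k) *: x' k).
  split; first by exists (fun k => c (lift ord_max k)), n.
  by rewrite big_ord1 sum_ext -addrA [_ + c ord_max *: _]addrC.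
- exists x'; split; first by move=> k; apply: spanmz.
  split; last by move=> v [c [n [Nn ->]]]; exists c, n.
  move=> c Nc k.
  have := Ix (fun i => oapp c 0 (unlift ord_max i)).
  rewrite sum_ext /= unlift_none /= scale0r add0r.
  under eq_bigr => j _ do rewrite liftK /=.
  by move/(_ Nc (lift ord_max k)); rewrite liftK.
Qed.

Lemma L1n d : forall X M, inG X -> subspace M -> (forall v, M v -> X v) ->
  quot_dim X M d -> inG M.
Proof.
elim: d => [|d IH] X M gX sM MX q.
  have -> : M = X by apply: predext => v; split; [apply: MX|apply: quot_dim0_sub].
  exact: gX.
have [H [sH MH HX qXH qHM]] := hyper (proj1 gX) sM MX q.
exact: IH H M (L1 gX sH HX qXH) sM MH qHM.
Qed.

Lemma L2n d : forall Y M, inG M -> subspace Y -> (forall v, M v -> Y v) ->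
  quot_dim Y M d -> inG Y.
Proof.
elim: d => [|d IH] Y M gM sY MY q.
  have -> : Y = M by apply: predext => v; split; [apply: quot_dim0_sub|apply: MY].
  exact: gM.
have [H [sH MH HY qYH qHM]] := hyper sY (proj1 gM) MY q.
exact: L2 (IH H M gM sH MH qHM) sY HY qYH.
Qed.

End Hyp.

Section Exist.
Variables (K : unitRingType) (V : lmodType K).
Hypothesis divK : division_ring K.
Hypothesis iV : infinite_dim V.
Implicit Types (X Y Z N M A B S C U D H : V -> Prop).

Definition QG (G : V * V -> Prop) :=
  [/\ G (0, 0), (forall a p q, G p -> G q -> G (a *: p.1 + q.1, a *: p.2 + q.2)),
      (forall u v v', G (u, v) -> G (u, v') -> v = v'),
      (forall u u' v, G (u, v) -> G (u', v) -> u = u')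
    & (forall u v u' v', G (u, v) -> G (u', v') -> u = v' -> u = 0)].

Lemma swap4 (W : zmodType) (x p x' p' : W) : x + p = x' + p' -> p - p' = x' - x.
Proof.
move=> E; have := congr1 (fun z => z - x - p') E.
by rewrite /= [x + p]addrC addrK [x' + p' - x]addrAC addrK.
Qed.

Lemma chain2 (F : (V * V -> Prop) -> Prop) p q : pchain F ->
  (exists W, F W /\ W p) -> (exists W, F W /\ W q) -> exists W, F W /\ W p /\ W q.
Proof.
move=> ch [S1 [F1 S1p]] [S2 [F2 S2q]].
case: (ch S1 S2 F1 F2) => H; [exists S2|exists S1]; split=> //; split=> //; exact: H.
Qed.

Lemma invZ (v : V) (a : K) : a != 0 -> v = a^-1 *: (a *: v).
Proof. by move=> an; rewrite scalerA mulVr ?scale1r //; exact (unit_nz divK an). Qed.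

Lemma exists_G : exists X, inG X.
Proof.
have [|//||G [[G0 Glin Gfun Ginj Gdisj] Gmax]] := @zorn_pred (V * V) QG (fun p => p = (0, 0)) (0, 0).
- split=> //.
  + by move=> a p q -> ->; rewrite /= scaler0 addr0.
  + by move=> u v v' [_ ->] [_ ->].
  + by move=> u u' v [-> _] [-> _].
  + by move=> u v u' v' [-> _].
- move=> F FQ ch [S1 FS1]; split.
  + by exists S1; split=> //; have [] := FQ S1 FS1.
  + move=> a p q Hp Hq; have [S [FS [Sp Sq]]] := chain2 ch Hp Hq.
    by exists S; split=> //; have [_ h _ _ _] := FQ S FS; apply: h.
  + move=> u v v' Hp Hq; have [S [FS [Sp Sq]]] := chain2 ch Hp Hq.
    by have [_ _ h _ _] := FQ S FS; apply: h Sp Sq.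
  + move=> u u' v Hp Hq; have [S [FS [Sp Sq]]] := chain2 ch Hp Hq.
    by have [_ _ _ h _] := FQ S FS; apply: h Sp Sq.
  + move=> u v u' v' Hp Hq; have [S [FS [Sp Sq]]] := chain2 ch Hp Hq.
    by have [_ _ _ _ h] := FQ S FS; apply: h Sp Sq.
pose A u := exists v, G (u, v).
pose B v := exists u, G (u, v).
have sA : subspace A.
  split; first by exists 0.
  by move=> a u u' [v g] [v' g']; exists (a *: v + v'); exact: (Glin a _ _ g g').
have sB : subspace B.
  split; first by exists 0.
  by move=> a v v' [u g] [u' g']; exists (a *: u + u'); exact: (Glin a _ _ g g').
have AB : forall v, A v -> B v -> v = 0.
  by move=> v [w g] [u g']; apply: (Gdisj _ _ _ _ g g').
have BA : forall v, B v -> A v -> v = 0 by move=> v ? ?; apply: AB.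
have iAB : iso A B.
  exists (fun u v => G (u, v)); split=> //.
  - by move=> a u v u' v'; apply: (Glin a (u, v) (u', v')).
  - by move=> u v g; split; [exists v|exists u].
have pmax : forall u w, ~ (forall a b, subsp_sum A B (a *: u + b *: w) -> a = 0 /\ b = 0).
  move=> u w pind.
  have sAB := sum_sub sA sB.
  pose G' (p : V * V) := exists a x y, G (x, y) /\ p = (x + a *: u, y + a *: w).
  have QG' : QG G'.
    split.
    - by exists 0, 0, 0; rewrite !scale0r !addr0.
    - move=> b p q [a [x [y [g ->]]]] [a' [x' [y' [g' ->]]]] /=.
      exists (b * a + a'), (b *: x + x'), (b *: y + y'); split; first exact: (Glin b _ _ g g').
      congr (_, _); by rewrite scalerDr scalerDl scalerA addrACA.
    - move=> x0 v v' [a [x [y [g [E1 E2]]]]] [a' [x' [y' [g' [E1' E2']]]]].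
      have hA : subsp_sum A B ((a - a') *: u + 0 *: w).
        exists (x' - x), 0; split; first by apply: subB => //; [exists y'|exists y].
        split; first exact: sub0.
        rewrite scale0r !addr0 scalerBl; apply: swap4; exact: etrans (esym E1) E1'.
      have [ea _] := pind _ _ hA; move/eqP: ea; rewrite subr_eq0 => /eqP ea.
      rewrite -ea in E1' E2'.
      have ex : x = x' by apply: (addIr (a *: u)); rewrite -E1 -E1'.
      rewrite -ex in g'; by rewrite E2 E2' (Gfun _ _ _ g g').
    - move=> u0 u0' v0 [a [x [y [g [E1 E2]]]]] [a' [x' [y' [g' [E1' E2']]]]].
      have hB : subsp_sum A B (0 *: u + (a - a') *: w).
        exists 0, (y' - y); split; first exact: sub0.
        split; first by apply: subB => //; [exists x'|exists x].
        rewrite scale0r !add0r scalerBl; apply: swap4; exact: etrans (esym E2) E2'.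
      have [_ ea] := pind _ _ hB; move/eqP: ea; rewrite subr_eq0 => /eqP ea.
      rewrite -ea in E1' E2'.
      have ey : y = y' by apply: (addIr (a *: w)); rewrite -E2 -E2'.
      rewrite -ey in g'; by rewrite E1 E1' (Ginj _ _ _ g g').
    - move=> u1 v1 u2 v2 [a [x [y [g [E1 E2]]]]] [a' [x' [y' [g' [E1' E2']]]]] E.
      have hAB : subsp_sum A B (a *: u + (- a') *: w).
        exists (- x), y'; split; first by apply: subN => //; exists y.
        split; first by exists x'.
        rewrite scaleNr [- x + _]addrC; apply: swap4.
        by rewrite -E1 -E2'.
      have [a0 a'0] := pind _ _ hAB.
      move: E; rewrite E1 E2' a0 scale0r addr0 => E.
      apply: (Gdisj _ _ _ _ g g'); move/eqP: a'0; rewrite oppr_eq0 => /eqP a'0.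
      by rewrite E a'0 scale0r addr0.
  have GG' : forall p, G p -> G' p.
    by move=> [x y] g; exists 0, x, y; rewrite !scale0r !addr0.
  have g : G (u, w).
    by apply: (Gmax G' QG' GG'); exists 1, 0, 0; rewrite !scale1r !add0r.
  have Au : A u by exists w.
  have : subsp_sum A B (1 *: u + 0 *: w).
    exists u, 0; rewrite scale1r scale0r !addr0; split=> //; split=> //; exact: sub0.
  by move/pind => [/eqP]; rewrite oner_eq0.
case: (classic (forall v, subsp_sum A B v)) => [full|].
  by exists A; apply: (iso_inG sA sB BA full (iso_sym iAB)).
move=> /not_all_ex_not [r nr].
have full : forall v, subsp_sum (subsp_sum A B) (line r) v.
  move=> v; apply: NNPP => nv; apply: (pmax r v) => a b hab.
  have sAB := sum_sub sA sB.
  have b0 : b = 0.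
    case: (eqVneq b 0) => // bn; exfalso; apply: nv.
    exists (b^-1 *: (a *: r + b *: v)), (- (b^-1 * a) *: r); split; first exact: subZ.
    split; first by exists (- (b^-1 * a)).
    rewrite scalerDr !scalerA mulVr ?scale1r ?(unit_nz divK) // scaleNr.
    by rewrite addrAC subrr add0r.
  split=> //; move: hab; rewrite b0 scale0r addr0 => har.
  case: (eqVneq a 0) => // an; exfalso; apply: nr.
  by rewrite (invZ r an); apply: subZ.
pose X := addl A r.
have sX : subspace X := addl_sub r sA.
have rA : forall a, A (a *: r) -> a = 0.
  move=> a Aa; case: (eqVneq a 0) => // an; exfalso; apply: nr.
  rewrite (invZ r an); apply: subZ; first exact: sum_sub.
  exists (a *: r), 0; rewrite addr0; split=> //; split=> //; exact: (sub0 sB).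
have BX : forall v, B v -> X v -> v = 0.
  move=> v Bv [a [x [Ax E]]].
  have a0 : a = 0.
    case: (eqVneq a 0) => // an; exfalso; apply: nr.
    rewrite (invZ r an).
    apply: subZ; first exact: sum_sub.
    by exists (- x), v; split; [exact: subN|split=> //; rewrite E addKr].
  rewrite a0 scale0r addr0 in E; rewrite E in Bv *; exact: AB.
have XB : forall v, subsp_sum X B v.
  move=> v; have [s [t [[x [y [Ax [By ->]]]] [[c ->] ->]]]] := full v.
  exists (x + c *: r), y; split; first by exists c, x.
  by split=> //; rewrite addrAC.
have nA : ~ finsp A.
  move=> fA; apply: (V_nfinsp divK iV).
  have -> : (fun _ : V => True) = subsp_sum (subsp_sum A B) (line r) by apply: predext.
  apply: finsp_sum => //; [exact: sum_sub|exact: line_sub| |exact: finsp_line].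
  apply: finsp_sum => //; exact: finsp_iso sB iAB fA.
exists X; apply: (iso_inG sX sB BX XB).
exact: iso_trans (iso_sym iAB) (iso_sym (HH divK sA nA rA)).
Qed.

End Exist.

Section Main.
Variables (K : unitRingType) (V : lmodType K).
Hypothesis divK : division_ring K.
Hypothesis iV : infinite_dim V.
Implicit Types (X Y Z N M A B S C U D H : V -> Prop).

Lemma rev_conn d : forall X Y, inG X -> inG Y ->
  quot_dim (subsp_sum X Y) X d -> quot_dim (subsp_sum X Y) Y d -> gconnected X Y.
Proof.
elim/ltn_ind: d => d IH X Y gX gY q1 q2.
have sX := proj1 gX; have sY := proj1 gY.
case: d IH q1 q2 => [|k] IH q1 q2.
  have -> : Y = X.
    apply: predext => v; split=> h.
      by apply: (quot_dim0_sub q1); exists 0, v; rewrite add0r; split=> //; exact: sub0.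
    by apply: (quot_dim0_sub q2); exists v, 0; rewrite addr0; split=> //; split=> //; exact: sub0.
  by exists 0%N.
pose I := subsp_cap X Y.
have sI : subspace I := cap_sub sX sY.
have IX : forall v, I v -> X v by move=> v [].
have IY : forall v, I v -> Y v by move=> v [].
have qX : quot_dim X I k.+1 := quotQ' sX sY q2.
have qY : quot_dim Y I k.+1.
  have := quotQ' sY sX (eq_ind _ (fun P => quot_dim P X k.+1) q1 _ (sum_comm X Y)).
  by rewrite cap_comm.
have [H [sH IH' HX qXH qHI]] := hyper sX sI IX qX.
have [y [Yy [Iy Sy]]] := qY.
set y0 := y ord0.
have nXy : ~ X y0.
  move=> Xy; apply: (indep_notin ord0 Iy); split=> //; exact: Yy.
have hyH : forall a, H (a *: y0) -> a = 0.
  move=> a Ha; case: (eqVneq a 0) => // an; exfalso; apply: nXy.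
  rewrite (invZ divK y0 an); apply: subZ => //; exact: HX.
pose Z := addl H y0.
have sZ : subspace Z := addl_sub y0 sH.
have HZ : forall v, H v -> Z v by move=> v; apply: addlN.
have qZH : quot_dim Z H 1 := addl_q1 sH hyH.
have gH := L1 divK iV gX sH HX qXH.
have gZ := L2 divK iV gH sZ HZ qZH.
have Zy0 : Z y0 := addlw y0 sH.
have [e [e1 [a1 a2]]] := idx divK sX sZ sH HX HZ qXH qZH.
have e1' : e = 1%N.
  case: e e1 a1 a2 => [|[|]] // _ a1 a2; exfalso; apply: nXy.
  by apply: (quot_dim0_sub a1); exists 0, y0; rewrite add0r; split=> //; exact: sub0.
rewrite e1' in a1 a2.
have IH2 : forall v, I v -> H v by [].
have qZI : quot_dim Z I (k + 1) := quot_trans sI sH IH' HZ qZH qHI.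
rewrite addn1 in qZI.
have [e' [e'k [b1 b2]]] := idx divK sZ sY sI (fun v Iv => HZ v (IH' v Iv)) IY qZI qY.
have qZc : quot_dim Z (subsp_cap Z Y) e' := quotQ' sZ sY b2.
have sZY := cap_sub sZ sY.
have [_ [f qf]] := fd_sub divK sI sZY sZ (fun v Iv => conj (HZ v (IH' v Iv)) (IY v Iv))
   (fun v => @proj1 _ _) qZI.
have Et := quot_dim_uniq divK sI (quot_trans sI sZY (fun v Iv => conj (HZ v (IH' v Iv)) (IY v Iv))
   (fun v => @proj1 _ _) qZc qf) qZI.
have lt : (e' < k.+1)%N.
  case: f qf Et => [|f] qf Et.
    exfalso; apply: (indep_notin ord0 Iy); apply: (quot_dim0_sub qf); split=> //.
  by rewrite -Et addSn ltnS leq_addl.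
have [n W] := IH e' lt Z Y gZ gY b1 b2.
exists n.+1; exists Z; split=> //; split=> //.
Qed.

End Main.

Section Main2.
Variables (K : unitRingType) (V : lmodType K).
Hypothesis divK : division_ring K.
Hypothesis iV : infinite_dim V.
Implicit Types (X Y Z N M A B S C U D H : V -> Prop).

Lemma part3 X Y : inG X -> complement X Y -> ~ gconnected X Y.
Proof.
move=> gX [sY [capXY XY]] [n W]; have sX := proj1 gX.
have YX : forall v, Y v -> X v -> v = 0 by move=> v Yv Xv; apply/capXY.
have [d [_ [[z [_ [_ Hz]]] _]]] := walk_fwd divK sX sY W.
have [_ nY] := inG_nfinsp divK iV gX sY YX XY.
have [w [Yw Iw]] := nfinsp_vecs divK sY nY d.+1.
have Iw' : indep_mod X w.
  move=> c Xc; apply: Iw; apply: YX => //; exact: subsum.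
have := steinitz divK sX Iw' (fun i => Hz (w i) (XY (w i))).
by rewrite ltnn.
Qed.

Lemma part4 X Y : inG X -> inG Y -> (strict_sub Y X \/ strict_sub X Y) -> ~ gconnected X Y.
Proof.
move=> gX gY hs [n W]; have sX := proj1 gX; have sY := proj1 gY.
have [d [_ [q1 q2]]] := walk_fwd divK sX sY W.
case: hs => [[YX [v [Xv nYv]]]|[XY [v [Yv nXv]]]].
  have q0 : quot_dim (subsp_sum X Y) X 0.
    by apply: quot_dim0 => // u [x [y [Xx [Yy ->]]]]; apply: subD => //; apply: YX.
  have d0 := quot_dim_uniq divK sX q1 q0; rewrite d0 in q2.
  apply: nYv; apply: (quot_dim0_sub q2); exists v, 0; rewrite addr0; split=> //; split=> //.
  exact: sub0.
have q0 : quot_dim (subsp_sum X Y) Y 0.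
  by apply: quot_dim0 => // u [x [y [Xx [Yy ->]]]]; apply: subD => //; apply: XY.
have d0 := quot_dim_uniq divK sY q2 q0; rewrite d0 in q1.
apply: nXv; apply: (quot_dim0_sub q1); exists 0, v; rewrite add0r; split=> //.
exact: sub0.
Qed.

Lemma part6 X n : inG X -> exists Y, inG Y /\ gconnected X Y /\
  forall m, (m <= n)%N -> ~ walk m X Y.
Proof.
move=> gX; have sX := proj1 gX.
have [C [sC CX XC]] := compl_ex divK sX.
have [nX nC] := inG_nfinsp divK iV gX sC CX XC.
have [x [Xx Ix]] := nfinsp_vecs divK sX nX n.+1.
have sS := spanm_sub x (@zs_sub K V).
have SX : forall v, spanm zs x v -> X v.
  move=> v [c [z [z0 ->]]]; rewrite /zs in z0; rewrite z0 add0r; exact: subsum.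
have [T [sT TX TS XST]] := rel_compl divK sX sS SX.
have qXT : quot_dim X T n.+1.
  exists x; split=> //; split.
    move=> c Tc; apply: Ix; rewrite /zs; apply: TS => //.
    by exists c, 0; rewrite add0r; split.
  move=> v Xv; have [s [t [[c [z [z0 ->]]] [Tt ->]]]] := XST v Xv.
  rewrite /zs in z0; rewrite z0 add0r; exists c, t; split=> //; exact: addrC.
have [y [Cy Iy]] := nfinsp_vecs divK sC nC n.+1.
have IyX : indep_mod X y.
  move=> c Xc; apply: Iy; apply: CX => //; exact: subsum.
pose Y := spanm T y.
have sY : subspace Y := spanm_sub y sT.
have TY : forall v, T v -> Y v by move=> v; apply: spanmN.
have qYT : quot_dim Y T n.+1.
  exists y; split; first by move=> i; apply: spanmz.
  split; last by move=> v [c [t [Tt ->]]]; exists c, t.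
  by move=> c Tc; apply: IyX; apply: TX.
have gT := L1n divK iV gX sT TX qXT.
have gY := L2n divK iV gT sY TY qYT.
have [e [_ [q1 q2]]] := idx divK sX sY sT TX TY qXT qYT.
have qXc : quot_dim X (subsp_cap X Y) e := quotQ' sX sY q2.
have capT : forall v, subsp_cap X Y v -> T v.
  move=> v [Xv [c [t [Tt E]]]].
  have Xs : X (\sum_(i < n.+1) c i *: y i).
    have -> : \sum_(i < n.+1) c i *: y i = v - t by rewrite E addrC addKr.
    apply: subB => //; exact: TX.
  have c0 := IyX c Xs.
  rewrite E big1 ?addr0 // => i _; by rewrite c0 scale0r.
have q0 : quot_dim (subsp_cap X Y) T 0 := quot_dim0 sT capT.
have := quot_trans sT (cap_sub sX sY) (fun v Tv => conj (TX v Tv) (TY v Tv)) (fun v => @proj1 _ _) qXc q0.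
rewrite add0n => qXT'.
have ee := quot_dim_uniq divK sT qXT' qXT.
rewrite ee in q1 q2.
exists Y; split=> //; split; first exact (rev_conn divK iV gX gY q1 q2).
move=> m mn W.
have [d [dm [r1 r2]]] := walk_fwd divK sX sY W.
have := quot_dim_uniq divK sX r1 q1 => dE.
by move: (leq_trans dm mn); rewrite dE ltnn.
Qed.

End Main2.

Theorem mainTheorem8 (K : unitRingType) (V : lmodType K) :
  division_ring K -> infinite_dim V ->
  (exists X Y : V -> Prop, inG X /\ inG Y /\ ~ gconnected X Y) /\
  (forall X Y : V -> Prop, inG X -> inG Y ->
     (gconnected X Y <->
      exists d : nat, quot_dim (subsp_sum X Y) X d /\ quot_dim (subsp_sum X Y) Y d)) /\
  (forall X Y : V -> Prop, inG X -> complement X Y -> ~ gconnected X Y) /\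
  (forall X Y : V -> Prop, inG X -> inG Y ->
     (strict_sub Y X \/ strict_sub X Y) -> ~ gconnected X Y) /\
  (forall X H : V -> Prop, inG X -> subspace H -> (forall v, H v -> X v) ->
     quot_dim X H 1 -> inG H) /\
  (forall X : V -> Prop, inG X -> forall n : nat,
     exists Y : V -> Prop, inG Y /\ gconnected X Y /\
       forall m, (m <= n)%N -> ~ walk m X Y).
Proof.
move=> divK iV.
split.
  have [X gX] := exists_G divK iV; have sX := proj1 gX.
  have [C [sC CX XC]] := compl_ex divK sX.
  have gC : inG C.
    apply: (iso_inG sC sX (fun v Xv Cv => CX v Cv Xv)); first by move=> v; rewrite sum_comm.
    exact: iso_sym (inG_iso gX sC CX XC).
  exists X, C; split=> //; split=> //; apply: (part3 divK iV gX); split=> //; split=> //.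
  move=> v; split; first by move=> [Xv Cv]; exact: CX.
  by move=> ->; split; exact: sub0.
split.
  move=> X Y gX gY; split.
    move=> [n W]; have [d [_ [q1 q2]]] := walk_fwd divK (proj1 gX) (proj1 gY) W.
    by exists d.
  by move=> [d [q1 q2]]; exact (rev_conn divK iV gX gY q1 q2).
split; first by move=> X Y; apply: part3.
split; first by move=> X Y; apply: part4.
split; first by move=> X H; apply: L1.
by move=> X gX n; apply: part6.
Qed.
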